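(* Let $\{\widehat{\mathcal G}_N\}_N$ be a family of directed acyclic graphs on node sets $\{1,\dots,N\}$ with bounded diameter, in which the reference node $N$ is a common ancestor of all nodes, and let $\mathbf H,\mathbf M$ be the associated matrices defined in the context. Then the condition $$\limsup_{N\to\infty}\ \sup_{\mathbf A:\|\mathbf A\|_\infty\le1}\ \|\mathbf M^{-1}(\mathbf H\odot\mathbf A)\mathbf 1\|_\infty<\infty$$ is satisfied if one of the following three conditions is met: (i) all paths from any node to the reference node have bounded length; (ii) $\sup_i\rho_i^-<\infty$; (iii) a fraction bounded away from $0$ of the in-neighbors of any node is $(\tau,h)$-proximal to the reference node, for some $\tau>0$ and $h<\infty$.
   Context: For a directed graph on $\{1,\dots,N\}$, $\mathcal N_i^-$ denotes the set of in-neighbors of node $i$ and $\rho_i^-=|\mathcal N_i^-|$. In this directed setting the least-squares quality estimates are defined by $\widehat q_N=0$ and $\widehat q_i=\sum_{j\in\mathcal N_i^-}\frac{\widehat q_j+\widehat d_{i,j}}{\rho_i^-}$ for $i<N$; correspondingly $[\mathbf H]_{i,j}=1/\rho_i^-$ if $i<N$ and $j\in\mathcal N_i^-$, and $[\mathbf H]_{i,j}=0$ otherwise, and $\mathbf M=\mathbf I-\mathbf H$, so that $\widehat{\mathbf q}=\mathbf M^{-1}(\mathbf H\odot\widehat{\mathbf D})\mathbf 1$. Here $\odot$ is the Hadamard product, $\mathbf 1$ the all-ones vector, $\mathbf A=\{a_{i,j}\}$ ranges over real $N\times N$ matrices with $\|\mathbf A\|_\infty=\sup_{i,j}|a_{i,j}|$,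 and $\|\cdot\|_\infty$ of a vector is its maximum absolute entry. The random walk on such a graph starting at node $i$ moves from the current node $u$ to a uniformly random node of $\mathcal N_u^-$ and stops upon hitting node $N$. Definition: given a family of graphs $\{\mathcal G_N\}_N$, a node $i$ is proximal to the reference node $N$ with parameters $(\tau,h)$ if the random walk starting from $i$ reaches $N$ within $h$ hops with a probability that is asymptotically (in $N$) bounded below by $\tau$. *)

(* Defs.v *)
From HB Require Import structures.
From mathcomp Require Import all_boot all_order all_algebra.
From mathcomp Require Import reals.
Set Implicit Arguments. Unset Strict Implicit. Unset Printing Implicit Defensive.
Import Order.TTheory GRing.Theory Num.Theory.
Local Open Scope ring_scope.

(* A family of directed graphs: for every n, a graph on 'I_n.+1, i.e. on
   N = n+1 nodes; node k of the paper (1 <= k <= N) is the ordinal k-1, and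
   the reference node N is ord_max.  [G n u v] means there is an edge u -> v,
   so u is an in-neighbor of v. *)
Definition graph_family := forall n : nat, rel 'I_n.+1.

Definition in_nbrs n (E : rel 'I_n.+1) (i : 'I_n.+1) : {set 'I_n.+1} :=
  [set j | E j i].
Definition indeg n (E : rel 'I_n.+1) (i : 'I_n.+1) : nat := #|in_nbrs E i|.

Definition Hmx (R : realType) n (E : rel 'I_n.+1) : 'M[R]_n.+1 :=
  \matrix_(i, j) (if (i != ord_max) && E j i then (indeg E i)%:R^-1 else 0).

Definition Mmx (R : realType) n (E : rel 'I_n.+1) : 'M[R]_n.+1 :=
  1%:M - Hmx R E.

Definition hadamard (R : realType) n (A B : 'M[R]_n.+1) : 'M[R]_n.+1 :=
  \matrix_(i, j) (A i j * B i j).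

Definition qvec (R : realType) n (E : rel 'I_n.+1) (A : 'M[R]_n.+1)
  : 'cV[R]_n.+1 :=
  invmx (Mmx R E) *m (hadamard (Hmx R E) A *m const_mx 1).

(* Probability that the random walk started at i (moving to a uniformly random
   in-neighbour, stopped at the reference node) hits the reference node within
   h hops. *)
Fixpoint hit_prob (R : realType) n (E : rel 'I_n.+1) (h : nat) (i : 'I_n.+1)
  : R :=
  if i == ord_max then 1 else
  match h with
  | 0 => 0
  | h'.+1 => (\sum_(j in in_nbrs E i) hit_prob R E h' j) / (indeg E i)%:R
  end.

Definition acyclic_graph n (E : rel 'I_n.+1) : Prop :=
  forall u v : 'I_n.+1, E u v -> ~~ connect E v u.

Definition ref_ancestor n (E : rel 'I_n.+1) : Prop :=
  forall i : 'I_n.+1, connect E ord_max i.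

Definition bounded_diameter (G : graph_family) : Prop :=
  exists D : nat, forall n (u v : 'I_n.+1), connect (G n) u v ->
    exists p : seq 'I_n.+1, [/\ path (G n) u p, last u p = v & size p <= D]%N.

Definition cond_i (G : graph_family) : Prop :=
  exists L : nat, forall n (i : 'I_n.+1) (p : seq 'I_n.+1),
    path (fun u v => G n v u) i p -> last i p = ord_max -> (size p <= L)%N.

Definition cond_ii (G : graph_family) : Prop :=
  exists K : nat, forall n (i : 'I_n.+1), (indeg (G n) i <= K)%N.

Definition cond_iii (R : realType) (G : graph_family) : Prop :=
  exists (c tau : R) (h N0 : nat), 0 < c /\ 0 < tau /\
    forall n, (N0 <= n)%N -> forall i : 'I_n.+1, i != ord_max ->
      c * (indeg (G n) i)%:R <=
        #|[set j in in_nbrs (G n) i | tau <= hit_prob R (G n) h j]|%:R.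

(* Main.v *)
Require Import Defs.
From HB Require Import structures.
From mathcomp Require Import all_boot all_order all_algebra.
From mathcomp Require Import reals.
From mathcomp Require Import ring lra.
Import Order.TTheory GRing.Theory Num.Theory.
Local Open Scope ring_scope.

Section S.
Variable R : realType.

Lemma hitE0 n (E : rel 'I_n.+1) i :
  hit_prob R E 0 i = if i == ord_max then 1 else 0.
Proof. by []. Qed.

Lemma hitES n (E : rel 'I_n.+1) h i :
  hit_prob R E h.+1 i = if i == ord_max then 1 else
    (\sum_(j in in_nbrs E i) hit_prob R E h j) / (indeg E i)%:R.
Proof. by []. Qed.

Lemma hitN n (E : rel 'I_n.+1) h : hit_prob R E h ord_max = 1.
Proof. by case: h => [|h]; rewrite ?hitE0 ?hitES eqxx. Qed.

Lemma hit_ge0 n (E : rel 'I_n.+1) h i : 0 <= hit_prob R E h i.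
Proof.
elim: h i => [|h IH] i; first by rewrite hitE0; case: ifP.
rewrite hitES; case: ifP => // _.
apply: divr_ge0; last by [].
by apply: sumr_ge0 => j _.
Qed.

Lemma core n (E : rel 'I_n.+1) (x b : 'I_n.+1 -> R) (beta : R) :
  (forall i, i != ord_max -> (0 < indeg E i)%N) ->
  (forall i, `|b i| <= beta) -> b ord_max = 0 ->
  (forall i, x i = (if i == ord_max then 0 else
      (\sum_(j in in_nbrs E i) x j) / (indeg E i)%:R) + b i) ->
  forall h i, `|x i| <= h%:R * beta +
      (\big[Num.max/0]_j `|x j|) * (1 - hit_prob R E h i).
Proof.
move=> pos hb b0 hx.
have beta0 : 0 <= beta by apply: le_trans (hb ord_max); exact: normr_ge0.
set X := \big[Num.max/0]_j `|x j|.
have hX : forall j, `|x j| <= X by move=> j; exact: le_bigmax.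
have X0 : 0 <= X by apply: le_trans (hX ord_max); exact: normr_ge0.
elim=> [|h IH] i.
  rewrite hitE0 mul0r add0r; case: ifP => [/eqP ->|_].
    by rewrite subrr mulr0 hx eqxx b0 addr0 normr0.
  by rewrite subr0 mulr1.
case: (boolP (i == ord_max)) => [/eqP ->|ni].
  rewrite hitN subrr mulr0 addr0 hx eqxx b0 addr0 normr0.
  by apply: mulr_ge0.
rewrite hitES (negbTE ni) hx (negbTE ni).
have rp : (0 < (indeg E i)%:R :> R) by rewrite ltr0n; exact: pos.
apply: le_trans (ler_normD _ _) _.
have -> : h.+1%:R * beta = h%:R * beta + beta by rewrite -addn1 natrD mulrDl mul1r.
rewrite -addrA [beta + _]addrC addrA lerD // .
rewrite normrM normfV (gtr0_norm rp).
apply: le_trans (_ : (\sum_(j in in_nbrs E i) (h%:R * beta + X * (1 - hit_prob R E h j))) / (indeg E i)%:R <= _).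
  apply: ler_wpM2r; first by rewrite invr_ge0 ltW.
  apply: le_trans (ler_norm_sum _ _ _) _.
  by apply: ler_sum => j _; exact: IH.
rewrite big_split /= -mulr_sumr. under eq_bigr do rewrite mulrBr mulr1. rewrite sumrB !sumr_const -mulr_sumr /indeg. set r := #|in_nbrs E i|.
rewrite -/(indeg E i) in rp.
have rne : (r%:R : R) != 0 by rewrite gt_eqF.
have key2 : forall a c d e f : R, f != 0 ->
  (a * (c * f) + (d * f - d * e)) / f = a * c + d * (1 - e / f).
  by move=> a c d e f hf; field.
by rewrite -(mulr_natr beta) -(mulr_natr X) key2.
Qed.

Lemma core_bound n (E : rel 'I_n.+1) (x b : 'I_n.+1 -> R) (beta : R) (m : nat) (delta : R) :
  0 < delta -> delta <= 1 -> (forall i, delta <= hit_prob R E m i) ->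
  (forall i, i != ord_max -> (0 < indeg E i)%N) ->
  (forall i, `|b i| <= beta) -> b ord_max = 0 ->
  (forall i, x i = (if i == ord_max then 0 else
      (\sum_(j in in_nbrs E i) x j) / (indeg E i)%:R) + b i) ->
  forall i, `|x i| <= m%:R * beta / delta.
Proof.
move=> d0 d1 hd pos hb b0 hx.
have beta0 : 0 <= beta by apply: le_trans (hb ord_max); exact: normr_ge0.
have C := @core n E x b beta pos hb b0 hx m.
set X := \big[Num.max/0]_j `|x j| in C.
have hX : forall j, `|x j| <= X by move=> j; exact: le_bigmax.
have X0 : 0 <= X by apply: le_trans (hX ord_max); exact: normr_ge0.
have C' : forall i, `|x i| <= m%:R * beta + X * (1 - delta).
  move=> i; apply: le_trans (C i) _; rewrite lerD2l; apply: ler_wpM2l => //.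
  by rewrite lerD2l lerN2.
have XX : X <= m%:R * beta + X * (1 - delta).
  apply/bigmax_leP; split; last by move=> j _; exact: C'.
  apply: addr_ge0; first exact: mulr_ge0.
  by apply: mulr_ge0; rewrite // subr_ge0.
move=> i; apply: le_trans (hX i) _.
rewrite ler_pdivlMr //.
move: XX; rewrite mulrBr mulr1; move=> XX.
lra.
Qed.

Lemma Hmx_mul n (E : rel 'I_n.+1) (x : 'cV[R]_n.+1) i :
  (Hmx R E *m x) i 0 = if i == ord_max then 0 else
      (\sum_(j in in_nbrs E i) x j 0) / (indeg E i)%:R.
Proof.
rewrite mxE; case: ifP => ni.
  by apply: big1 => j _; rewrite mxE ni /= mul0r.
rewrite mulr_suml [RHS]big_mkcond /=; apply: eq_bigr => j _.
by rewrite mxE ni /= inE; case: ifP => _; rewrite ?mul0r // mulrC.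
Qed.

Lemma Hmx_ge0 n (E : rel 'I_n.+1) i j : 0 <= Hmx R E i j.
Proof. by rewrite mxE; case: ifP => _; rewrite ?invr_ge0 ?ler0n. Qed.

Lemma Hmx_row1 n (E : rel 'I_n.+1) i : i != ord_max -> (0 < indeg E i)%N ->
  \sum_j Hmx R E i j = 1.
Proof.
move=> ni pos.
rewrite (eq_bigr (fun j => if E j i then (indeg E i)%:R^-1 else 0)); last first.
  by move=> j _; rewrite mxE ni.
rewrite -big_mkcond /= (eq_bigl (fun j => j \in in_nbrs E i)); last by move=> j; rewrite inE.
by rewrite sumr_const -/(indeg E i) -[_^-1 *+ _]mulr_natr mulVf // pnatr_eq0 -lt0n.
Qed.

Lemma Mmx_mul n (E : rel 'I_n.+1) (x : 'cV[R]_n.+1) :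
  Mmx R E *m x = x - Hmx R E *m x.
Proof. by rewrite /Mmx mulmxBl mul1mx. Qed.

Lemma qvec_bound n (E : rel 'I_n.+1) (m : nat) (delta : R) :
  0 < delta -> delta <= 1 -> (forall i, delta <= hit_prob R E m i) ->
  (forall i, i != ord_max -> (0 < indeg E i)%N) ->
  forall A : 'M[R]_n.+1, (forall i j, `|A i j| <= 1) ->
  forall i, `|qvec E A i 0| <= m%:R / delta.
Proof.
move=> d0 d1 hd pos A hA.
have key : forall (x bb : 'cV[R]_n.+1) beta, (forall i, `|bb i 0| <= beta) ->
    bb ord_max 0 = 0 -> Mmx R E *m x = bb ->
    forall i, `|x i 0| <= m%:R * beta / delta.
  move=> x bb beta hb b0 hM.
  apply: (@core_bound n E (fun i => x i 0) (fun i => bb i 0) beta m delta) => // i.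
  have : (Mmx R E *m x) i 0 = bb i 0 by rewrite hM.
  rewrite Mmx_mul [((_ - _ : 'cV[R]_n.+1) i 0)]mxE [((- _ : 'cV[R]_n.+1) i 0)]mxE Hmx_mul => <-.
  by rewrite addrCA subrr addr0.
have unitM : Mmx R E \in unitmx.
  rewrite -unitmx_tr -row_free_unit -kermx_eq0; apply/eqP/row_matrixP => k.
  rewrite row0.
  set u := row k (kermx (Mmx R E)^T).
  have hu : u *m (Mmx R E)^T = 0 by rewrite /u -row_mul mulmx_ker row0.
  have hx : Mmx R E *m u^T = 0.
    by have := congr1 trmx hu; rewrite trmx_mul trmxK trmx0.
  have := key u^T 0 0; rewrite mulr0 mul0r => K.
  apply/rowP => j; rewrite [RHS]mxE.
  have h1 : forall i, `|(0 : 'cV[R]_n.+1) i 0| <= 0 by move=> i; rewrite mxE normr0.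
  have h2 : (0 : 'cV[R]_n.+1) ord_max 0 = 0 by rewrite mxE.
  have := K h1 h2 hx j.
  by rewrite normr_le0 mxE => /eqP.
have hq : Mmx R E *m qvec E A = hadamard (Hmx R E) A *m const_mx 1.
  by rewrite /qvec mulKVmx.
move=> i; have := key _ _ 1 _ _ hq i; rewrite mulr1; apply.
  move=> j; rewrite mxE.
  apply: le_trans (ler_norm_sum _ _ _) _.
  apply: le_trans (_ : \sum_k Hmx R E j k <= 1).
    apply: ler_sum => k _.
    rewrite [const_mx _ _ _]mxE mulr1 [hadamard _ _ _ _]mxE.
    rewrite normrM (ger0_norm (@Hmx_ge0 n E j k)).
    by rewrite -[X in _ <= X]mulr1 ler_wpM2l // Hmx_ge0.
  case: (boolP (j == ord_max)) => [/eqP ->|nj]; last by rewrite Hmx_row1 // pos.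
  by rewrite big1 // => k _; rewrite mxE eqxx.
rewrite mxE; apply: big1 => k _.
by rewrite !mxE eqxx /= !mul0r.
Qed.

Lemma indeg_pos n (E : rel 'I_n.+1) : ref_ancestor E ->
  forall i, i != ord_max -> (0 < indeg E i)%N.
Proof.
move=> ra i ni; have /connectP[p hp ei] := ra i.
move: hp ei; case/lastP: p => [|p j] /=; first by move=> _ ei; rewrite ei eqxx in ni.
rewrite rcons_path last_rcons => /andP[_ hj] ei.
apply/card_gt0P; exists (last ord_max p); by rewrite inE ei.
Qed.

Lemma rev_reach n (E : rel 'I_n.+1) : ref_ancestor E ->
  forall i, exists p, path (fun u v => E v u) i p /\ last i p = ord_max.
Proof.
move=> ra i; have /connectP[p hp ei] := ra i.
exists (rev (belast ord_max p)); split.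
  by rewrite ei rev_path.
have := lastI ord_max p; move/(congr1 rev); rewrite rev_rcons rev_cons.
move=> h.
have := congr1 (last ord_max) h; rewrite last_rcons /= -ei => h'.
by rewrite -h'.
Qed.

Lemma hit_case_i n (E : rel 'I_n.+1) : ref_ancestor E ->
  forall k i, (forall p, path (fun u v => E v u) i p -> last i p = ord_max ->
     (size p <= k)%N) -> hit_prob R E k i = 1.
Proof.
move=> ra; elim=> [|k IH] i hp.
  rewrite hitE0; case: ifP => // /negbT ni.
  have [p [p1 p2]] := @rev_reach n E ra i.
  have := hp p p1 p2; rewrite leqn0 => /nilP ep.
  by move: p2; rewrite ep /= => ei; rewrite ei eqxx in ni.
rewrite hitES; case: ifP => // /negbT ni.
rewrite (eq_bigr (fun _ => 1)); last first.
  move=> j; rewrite inE => ej; apply: IH => q q1 q2.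
  have := hp (j :: q); rewrite /= ej q1 q2 ltnS; exact.
rewrite sumr_const -/(indeg E i) -[_ *+ _]mulr_natr mul1r mulfV //.
by rewrite pnatr_eq0 -lt0n (@indeg_pos n E).
Qed.

Lemma hit_case_ii n (E : rel 'I_n.+1) (K : nat) :
  (forall j, (indeg E j <= K.+1)%N) ->
  forall p m i, path E ord_max p -> last ord_max p = i -> (size p <= m)%N ->
    (K.+1%:R^-1) ^+ m <= hit_prob R E m i.
Proof.
move=> hK; elim/last_ind => [|p j IH] m i.
  by move=> _ /= <-; rewrite hitN exprn_ile1 // ?invr_ge0 ?ler0n // invf_le1 // ?ltr0Sn // ler1n.
rewrite rcons_path last_rcons size_rcons => /andP[hp ej] ji hm.
case: m hm => // m hm.
case: (boolP (i == ord_max)) => [/eqP ->|ni].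
  by rewrite hitN exprn_ile1 // ?invr_ge0 ?ler0n // invf_le1 // ?ltr0Sn // ler1n.
rewrite hitES (negbTE ni) exprSr.
have rp : (0 < indeg E i)%N by apply/card_gt0P; exists (last ord_max p); rewrite inE -ji.
have rpR : (0 : R) < (indeg E i)%:R by rewrite ltr0n.
apply: le_trans (_ : hit_prob R E m (last ord_max p) / (indeg E i)%:R <= _).
  apply: ler_pM.
  - by apply: exprn_ge0; rewrite invr_ge0 ler0n.
  - by rewrite invr_ge0 ler0n.
  - exact: IH.
  - by rewrite lef_pV2 ?posrE ?ltr0Sn // ler_nat hK.
apply: ler_wpM2r; first by rewrite invr_ge0 ler0n.
rewrite (bigD1 (last ord_max p)) /=; last by rewrite inE -ji.
rewrite lerDl; apply: sumr_ge0 => k _; exact: hit_ge0.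
Qed.

Lemma hit_case_iii n (E : rel 'I_n.+1) (c tau : R) h :
  0 < tau -> ref_ancestor E ->
  (forall i, i != ord_max -> c * (indeg E i)%:R <=
     #|[set j in in_nbrs E i | tau <= hit_prob R E h j]|%:R) ->
  forall i, Num.min (c * tau) 1 <= hit_prob R E h.+1 i.
Proof.
move=> t0 ra hc i.
case: (boolP (i == ord_max)) => [/eqP ->|ni]; first by rewrite hitN ge_min lexx orbT.
rewrite hitES (negbTE ni) ge_min; apply/orP; left.
have rpR : (0 : R) < (indeg E i)%:R by rewrite ltr0n (@indeg_pos n E).
rewrite ler_pdivlMr //.
rewrite (bigID (fun j => tau <= hit_prob R E h j)) /=.
apply: le_trans (_ : \sum_(j in in_nbrs E i | tau <= hit_prob R E h j) hit_prob R E h j <= _); last first.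
  by rewrite lerDl; apply: sumr_ge0 => k _; exact: hit_ge0.
apply: le_trans (_ : \sum_(j in in_nbrs E i | tau <= hit_prob R E h j) tau <= _); last first.
  by apply: ler_sum => j /andP[].
rewrite (eq_bigl (fun j => j \in [set j in in_nbrs E i | tau <= hit_prob R E h j])); last first.
  by move=> j; rewrite !inE.
rewrite sumr_const -[tau *+ _]mulr_natr [c * tau]mulrC -mulrA.
by apply: ler_wpM2l; [exact: ltW | exact: hc].
Qed.
End S.

Theorem proposition3 (R : realType) (G : graph_family) :
  (forall n, acyclic_graph (G n)) ->
  (forall n, ref_ancestor (G n)) ->
  bounded_diameter G ->
  cond_i G \/ cond_ii G \/ cond_iii R G ->
  exists (C : R) (N0 : nat), forall n, (N0 <= n)%N ->
    forall A : 'M[R]_n.+1, (forall i j, `|A i j| <= 1) ->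
      forall i, `|qvec (G n) A i 0| <= C.
Proof.
move=> _ ra bd cases.
suff [m [delta [N0 [d0 [d1 hd]]]]] : exists (m : nat) (delta : R) (N0 : nat),
    0 < delta /\ delta <= 1 /\
    forall n, (N0 <= n)%N -> forall i, delta <= hit_prob R (G n) m i.
  exists (m%:R / delta), N0 => n hn A hA i.
  apply: (@qvec_bound R n (G n) m delta d0 d1 (hd n hn)) => //.
  exact: indeg_pos (ra n).
case: cases => [[L hL]|[[K hK]|[c [tau [h [N1 [c0 [t0 hc]]]]]]]].
- exists L, 1, 0%N; split; first exact: ltr01; split => // n _ i.
  rewrite (@hit_case_i R n (G n) (ra n) L i) // => p; exact: hL.
- have [D hD] := bd.
  exists D; exists ((K.+1)%:R^-1 ^+ D); exists 0%N; split.
    by apply: exprn_gt0; rewrite invr_gt0 ltr0Sn.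
  split; first by rewrite exprn_ile1 // ?invr_ge0 ?ler0n // invf_le1 // ?ltr0Sn // ler1n.
  move=> n _ i.
  have [q [q1 q2 q3]] := hD n ord_max i (ra n i).
  apply: (@hit_case_ii R n (G n) K _ q D i) => // j; exact: leqW (hK n j).
- exists h.+1, (Num.min (c * tau) 1), N1; split.
    by rewrite lt_min ltr01 andbT mulr_gt0.
  split; first by rewrite ge_min lexx orbT.
  move=> n hn i; apply: (@hit_case_iii R n (G n) c tau h t0 (ra n)) => //.
  exact: hc n hn.
Qed.
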